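(* For all sets S and Y, τ : H_{S⊎Y} → H_S is a monad morphism, i.e. τ · η^{S⊎Y} = η^S and τ · f^{*}_{S⊎Y} = (τ · f)^{*}_{S} · τ for every f : X → H_{S⊎Y} Z.
   Context: For a set S, a trajectory over S is a pair ⟨I,e⟩ with I a downset of the extended non-negative reals of the form [0,d] (d a finite non-negative real) or [0,d) (d a non-negative real or ∞), and e : I → S. Let Trj_S be the monoid of trajectories with domain [0,d), d finite, under concatenation ⟨[0,d1),e1⟩⌢⟨[0,d2),e2⟩ = ⟨[0,d1+d2), λt. if t<d1 then e1^t else e2^{t−d1}⟩, with unit the empty trajectory ε = ⟨∅, !⟩. Define H_S X = (Trj_S × X) ∪ (set of all trajectories over S), written as triples ⟨I,e,x⟩ (I of the form [0,d), d finite) and pairs ⟨I,e⟩. This is a monad (generalized writer monad) with unit η^S(x) = ⟨ε,x⟩ and Kleisli lifting f^{*}_S(m,x) = (m⌢n, y) if f(x) = ⟨n,y⟩, f^{*}_S(m,x) = m⌢e if f(x) = e is a trajectory, and f^{*}_S(e) = e for a trajectory e. Define τ : H_{S⊎Y} X → H_S X by τ(I,e,x) = ⟨I,e',x⟩ if I = I', and ⟨I',e'⟩ otherwise; and τ(I,e) = ⟨I',e'⟩, where ⟨I',e'⟩ is the largest trajectory (prefix of ⟨I,e⟩) such that for all t ∈ I', e^t = inl e'^t. *)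

(* Defs.v *)
From Stdlib Require Import Reals Lra ClassicalEpsilon.
Open Scope R_scope.
Set Implicit Arguments.

(* Downsets of the extended non-negative reals of the allowed forms:
   DCl d = [0,d] (d finite), DOp d = [0,d) (d finite), DInf = [0,oo). *)
Inductive dom := DCl (d : R) | DOp (d : R) | DInf.

Definition dom_ok (I : dom) : Prop :=
  match I with DCl d | DOp d => 0 <= d | DInf => True end.

Definition in_dom (I : dom) (t : R) : Prop :=
  0 <= t /\ match I with DCl d => t <= d | DOp d => t < d | DInf => True end.

Record trj (S : Type) := Trj {
  tdom : dom;
  tdom_ok : dom_ok tdom;
  tfun : forall t, in_dom tdom t -> S }.

(* Elements of the monoid Trj_S: trajectories with domain [0,d), d finite. *)
Record ftrj (S : Type) := FTrj {
  flen : R;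
  flen_ok : 0 <= flen;
  ffun : forall t, in_dom (DOp flen) t -> S }.

Definition ftrj_to_trj S (m : ftrj S) : trj S :=
  @Trj S (DOp (flen m)) (flen_ok m) (ffun m).

Lemma in_dom_empty t : in_dom (DOp 0) t -> False.
Proof. unfold in_dom; lra. Qed.

Definition eps_ftrj (S : Type) : ftrj S :=
  @FTrj S 0 (Rle_refl 0) (fun t h => False_rect S (@in_dom_empty t h)).

Definition eps_trj (S : Type) : trj S := ftrj_to_trj (eps_ftrj S).

Definition shift (d1 : R) (I : dom) : dom :=
  match I with DCl d => DCl (d1 + d) | DOp d => DOp (d1 + d) | DInf => DInf end.

Lemma shift_ok d1 I : 0 <= d1 -> dom_ok I -> dom_ok (shift d1 I).
Proof. destruct I; simpl; lra. Qed.

Lemma cat_l d1 I t : in_dom (shift d1 I) t -> t < d1 -> in_dom (DOp d1) t.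
Proof. destruct I; unfold in_dom; simpl; lra. Qed.

Lemma cat_r d1 I t : in_dom (shift d1 I) t -> ~ t < d1 -> in_dom I (t - d1).
Proof.
  intros H Hn; apply Rnot_lt_le in Hn; destruct I; unfold in_dom in *; simpl in *; lra.
Qed.

Definition cat_fun S (m : ftrj S) (I : dom) (e : forall t, in_dom I t -> S) :
  forall t, in_dom (shift (flen m) I) t -> S :=
  fun t h => match Rlt_dec t (flen m) with
             | left hl => @ffun S m t (@cat_l (flen m) I t h hl)
             | right hr => e (t - flen m) (@cat_r (flen m) I t h hr)
             end.

Definition cat_trj S (m : ftrj S) (e : trj S) : trj S :=
  @Trj S (shift (flen m) (tdom e)) (@shift_ok (flen m) (tdom e) (flen_ok m) (tdom_ok e))
         (@cat_fun S m (tdom e) (@tfun S e)).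

Definition cat_ftrj S (m n : ftrj S) : ftrj S :=
  @FTrj S (flen m + flen n) (Rplus_le_le_0_compat _ _ (flen_ok m) (flen_ok n))
          (@cat_fun S m (DOp (flen n)) (@ffun S n)).

(* H_S X = (Trj_S × X) ∪ (all trajectories over S) *)
Inductive H (S X : Type) :=
  | Hret (m : ftrj S) (x : X)
  | Htrj (e : trj S).
Arguments Hret {S X}.
Arguments Htrj {S X}.

Definition eta (S X : Type) (x : X) : H S X := Hret (eps_ftrj S) x.

Definition klift (S X Z : Type) (f : X -> H S Z) (p : H S X) : H S Z :=
  match p with
  | Hret m x => match f x with
                | Hret n y => Hret (cat_ftrj m n) y
                | Htrj e => Htrj (cat_trj m e)
                end
  | Htrj e => Htrj e
  end.

Definition inl_prefix (S Y : Type) (e : trj (S + Y)) (e' : trj S) : Prop :=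
  (forall t, in_dom (tdom e') t -> in_dom (tdom e) t) /\
  (forall t (h : in_dom (tdom e) t) (h' : in_dom (tdom e') t),
      @tfun _ e t h = inl (@tfun _ e' t h')).

Definition largest_inl_prefix (S Y : Type) (e : trj (S + Y)) (e' : trj S) : Prop :=
  inl_prefix e e' /\
  forall e'', inl_prefix e e'' ->
    forall t, in_dom (tdom e'') t -> in_dom (tdom e') t.

(* the largest prefix (chosen by Hilbert epsilon; it exists and is unique) *)
Definition tau_trj (S Y : Type) (e : trj (S + Y)) : trj S :=
  epsilon (inhabits (eps_trj S)) (largest_inl_prefix e).

Definition trj_to_ftrj S (e : trj S) (d : R) (hd : 0 <= d) (Heq : tdom e = DOp d) :
  ftrj S :=
  @FTrj S d hd (fun t h => @tfun S e t (eq_ind_r (fun I => in_dom I t) h Heq)).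

Definition tau (S Y X : Type) (p : H (S + Y) X) : H S X :=
  match p with
  | Hret m x =>
      let e' := tau_trj (ftrj_to_trj m) in
      match excluded_middle_informative (tdom e' = DOp (flen m)) with
      | left Heq => Hret (@trj_to_ftrj S e' (flen m) (flen_ok m) Heq) x
      | right _ => Htrj e'
      end
  | Htrj e => Htrj (tau_trj e)
  end.

(* Main.v *)
Require Import Defs.
From Stdlib Require Import Reals.
From Stdlib Require Import Lra ClassicalEpsilon Classical FunctionalExtensionality ProofIrrelevance.
Open Scope R_scope.
Set Implicit Arguments.

Lemma tfun_irr S (e : trj S) t1 t2 h1 h2 : t1 = t2 -> @tfun _ e t1 h1 = @tfun _ e t2 h2.
Proof. intros ->. f_equal. apply proof_irrelevance. Qed.

Lemma ffun_irr S (e : ftrj S) t1 t2 h1 h2 : t1 = t2 -> @ffun _ e t1 h1 = @ffun _ e t2 h2.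
Proof. intros ->. f_equal. apply proof_irrelevance. Qed.

Lemma trj_fun_eq S (e1 e2 : trj S) : e1 = e2 -> forall t h1 h2, @tfun _ e1 t h1 = @tfun _ e2 t h2.
Proof. intros ->. intros; apply tfun_irr; reflexivity. Qed.

Lemma trj_eq S (e1 e2 : trj S) (Hd : tdom e1 = tdom e2) :
  (forall t h1 h2, @tfun _ e1 t h1 = @tfun _ e2 t h2) -> e1 = e2.
Proof.
  destruct e1 as [I1 ok1 f1], e2 as [I2 ok2 f2]; simpl in *. subst I2.
  intros Hf. assert (ok1 = ok2) by apply proof_irrelevance. subst ok2.
  assert (f1 = f2).
  { apply functional_extensionality_dep; intro t. apply functional_extensionality; intro h. apply Hf. }
  subst; reflexivity.
Qed.

Lemma ftrj_eq S (e1 e2 : ftrj S) (Hd : flen e1 = flen e2) :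
  (forall t h1 h2, @ffun _ e1 t h1 = @ffun _ e2 t h2) -> e1 = e2.
Proof.
  destruct e1 as [I1 ok1 f1], e2 as [I2 ok2 f2]; simpl in *. subst I2.
  intros Hf. assert (ok1 = ok2) by apply proof_irrelevance. subst ok2.
  assert (f1 = f2).
  { apply functional_extensionality_dep; intro t. apply functional_extensionality; intro h. apply Hf. }
  subst; reflexivity.
Qed.

Lemma dom_ext I J : dom_ok I -> dom_ok J -> (forall t, in_dom I t <-> in_dom J t) -> I = J.
Proof.
  intros HI HJ H.
  destruct I as [a|a|], J as [b|b|]; simpl in HI, HJ; unfold in_dom in H.
  - assert (A := proj1 (H a) ltac:(lra)). assert (B := proj2 (H b) ltac:(lra)). f_equal; lra.
  - exfalso. assert (A := proj1 (H a) ltac:(lra)).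
    assert (B := proj2 (H ((a+b)/2)) ltac:(lra)). lra.
  - exfalso. assert (B := proj2 (H (a+1)) ltac:(lra)). lra.
  - exfalso. assert (A := proj2 (H b) ltac:(lra)).
    assert (B := proj1 (H ((a+b)/2)) ltac:(lra)). lra.
  - f_equal. destruct (Rtotal_order a b) as [h|[h|h]]; auto; exfalso.
    + assert (A := proj2 (H a) ltac:(lra)). lra.
    + assert (A := proj1 (H b) ltac:(lra)). lra.
  - exfalso. pose proof (Rle_abs a). pose proof (Rabs_pos a).
    assert (B := proj2 (H (Rabs a + 1)) ltac:(lra)). lra.
  - exfalso. pose proof (Rle_abs b). pose proof (Rabs_pos b).
    assert (B := proj1 (H (Rabs b + 1)) ltac:(lra)). lra.
  - exfalso. pose proof (Rle_abs b). pose proof (Rabs_pos b).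
    assert (B := proj1 (H (Rabs b + 1)) ltac:(lra)). lra.
  - reflexivity.
Qed.

Lemma downset I t t' : in_dom I t -> 0 <= t' <= t -> in_dom I t'.
Proof. destruct I; unfold in_dom; intuition lra. Qed.

Definition good S Y (e : trj (S+Y)) t :=
  in_dom (tdom e) t /\ forall h, exists s, @tfun _ e t h = inl s.

Definition LIP S Y (e : trj (S+Y)) (p : trj S) := inl_prefix e p /\
  forall t, 0 <= t -> (forall t', 0 <= t' <= t -> good e t') -> in_dom (tdom p) t.

Definition pick S Y (v : S + Y) (H : exists s, v = inl s) : S :=
  proj1_sig (constructive_indefinite_description _ H).

Lemma pick_spec S Y (v : S + Y) H : v = inl (@pick S Y v H).
Proof. unfold pick. destruct (constructive_indefinite_description _ H); auto. Qed.

Definition mk_pref S Y (e : trj (S+Y)) (J : dom) (Jok : dom_ok J)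
  (Hg : forall t, in_dom J t -> good e t) : trj S :=
  @Trj S J Jok (fun t h => pick (proj2 (Hg t h) (proj1 (Hg t h)))).

Lemma mk_pref_inl S Y (e : trj (S+Y)) J Jok Hg : inl_prefix e (@mk_pref S Y e J Jok Hg).
Proof.
  split.
  - intros t h; exact (proj1 (Hg t h)).
  - intros t h h'; simpl. rewrite <- pick_spec. apply tfun_irr; reflexivity.
Qed.

Lemma LIP_largest S Y (e : trj (S+Y)) p : LIP e p -> largest_inl_prefix e p.
Proof.
  intros [Hp Hl]. split; [exact Hp|]. intros e'' [H1 H2] t ht.
  apply Hl; [exact (proj1 ht)|]. intros t' Ht'. pose proof (downset ht Ht') as ht'.
  split; [apply H1; auto|]. intros h. exists (@tfun _ e'' t' ht'). apply H2.
Qed.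

Lemma largest_LIP S Y (e : trj (S+Y)) p : largest_inl_prefix e p -> LIP e p.
Proof.
  intros [Hp Hl]. split; auto. intros t Ht Hg.
  assert (Jok : dom_ok (DCl t)) by (simpl; lra).
  assert (Hg' : forall t', in_dom (DCl t) t' -> good e t') by (intros t' [a b]; apply Hg; lra).
  apply (Hl (@mk_pref _ _ e (DCl t) Jok Hg') (mk_pref_inl _ _)). simpl. unfold in_dom; lra.
Qed.

Lemma LIP_unique S Y (e : trj (S+Y)) p1 p2 : LIP e p1 -> LIP e p2 -> p1 = p2.
Proof.
  intros H1 H2. apply LIP_largest in H1. apply LIP_largest in H2.
  destruct H1 as [[I1 V1] L1], H2 as [[I2 V2] L2].
  assert (Hd : tdom p1 = tdom p2).
  { apply dom_ext; try apply tdom_ok. intro t; split; intro h.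
    - apply (L2 p1); auto. split; auto.
    - apply (L1 p2); auto. split; auto. }
  apply trj_eq; auto. intros t h1 h2.
  pose proof (V1 t (I1 t h1) h1). pose proof (V2 t (I1 t h1) h2).
  rewrite H in H0. injection H0; auto.
Qed.

Lemma lip_exists S Y (e : trj (S+Y)) : exists p, LIP e p.
Proof.
  set (G := fun u => 0 <= u /\ forall t, 0 <= t < u -> good e t).
  destruct (classic (bound G)) as [Hb | Hnb].
  - destruct (completeness G Hb) as [s [Hub Hlub]].
    { exists 0. split; [lra| intros; lra]. }
    assert (Hs0 : 0 <= s) by (apply Hub; split; [lra | intros; lra]).
    assert (Hlt : forall t, 0 <= t < s -> good e t).
    { intros t Ht. apply NNPP; intro Hn. assert (s <= t).
      { apply Hlub. intros u [Hu1 Hu2]. destruct (Rle_lt_dec u t) as [|Hlt']; auto.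
        exfalso; apply Hn, Hu2; lra. }
      lra. }
    destruct (classic (good e s)) as [Hgs | Hgs].
    + assert (Jok : dom_ok (DCl s)) by (simpl; lra).
      assert (Hg : forall t, in_dom (DCl s) t -> good e t).
      { intros t [a b]. destruct (Rle_lt_or_eq_dec t s b) as [c|c].
        - apply Hlt; lra.
        - subst; auto. }
      exists (@mk_pref _ _ e _ Jok Hg). split; [apply mk_pref_inl|].
      intros t Ht Hall. simpl. split; auto.
      apply Rnot_lt_le; intro Hts.
      assert (G t) by (split; auto; intros; apply Hall; lra).
      pose proof (Hub t H). lra.
    + assert (Jok : dom_ok (DOp s)) by (simpl; lra).
      assert (Hg : forall t, in_dom (DOp s) t -> good e t).
      { intros t [a b]. apply Hlt; lra. }
      exists (@mk_pref _ _ e _ Jok Hg). split; [apply mk_pref_inl|].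
      intros t Ht Hall. simpl. split; auto.
      apply Rnot_le_lt; intro Hts. apply Hgs, Hall; lra.
  - assert (Hall : forall t, 0 <= t -> good e t).
    { intros t Ht. apply NNPP; intro Hn. apply Hnb. exists t. intros u [Hu1 Hu2].
      apply Rnot_lt_le; intro. apply Hn, Hu2; lra. }
    assert (Jok : dom_ok DInf) by exact I.
    assert (Hg : forall t, in_dom DInf t -> good e t) by (intros t [a b]; auto).
    exists (@mk_pref _ _ e _ Jok Hg). split; [apply mk_pref_inl|].
    intros t Ht _. split; auto.
Qed.

Lemma tau_trj_LIP S Y (e : trj (S+Y)) : LIP e (tau_trj e).
Proof.
  apply largest_LIP. unfold tau_trj. apply epsilon_spec.
  destruct (lip_exists e) as [p Hp]. exists p. apply LIP_largest; auto.
Qed.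

Lemma tau_trj_eq S Y (e : trj (S+Y)) p : LIP e p -> tau_trj e = p.
Proof. intro H. apply (LIP_unique (tau_trj_LIP e) H). Qed.

Lemma in_shift_l d I t : dom_ok I -> 0 <= t < d -> in_dom (shift d I) t.
Proof. destruct I; unfold in_dom; simpl; intros; lra. Qed.

Lemma in_shift_r d I t : 0 <= d -> in_dom I (t - d) -> in_dom (shift d I) t.
Proof. destruct I; unfold in_dom; simpl; intros; lra. Qed.

Lemma cat_val_l S (m : ftrj S) (e : trj S) t h h' :
  t < flen m -> @tfun _ (cat_trj m e) t h = @ffun _ m t h'.
Proof.
  intros Hl. simpl. unfold cat_fun. destruct (Rlt_dec t (flen m)); [apply ffun_irr; auto | contradiction].
Qed.

Lemma cat_val_r S (m : ftrj S) (e : trj S) t h h' :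
  ~ t < flen m -> @tfun _ (cat_trj m e) t h = @tfun _ e (t - flen m) h'.
Proof.
  intros Hl. simpl. unfold cat_fun. destruct (Rlt_dec t (flen m)); [contradiction | apply tfun_irr; auto].
Qed.

Lemma good_cat_l S Y (m : ftrj (S+Y)) e t : t < flen m ->
  good (cat_trj m e) t <-> good (ftrj_to_trj m) t.
Proof.
  intros Hl. split; intros [Hd Hv].
  - assert (Hd' : in_dom (tdom (ftrj_to_trj m)) t) by (simpl; unfold in_dom; destruct Hd; lra).
    split; auto. intros h. destruct (Hv Hd) as [s Hs]. exists s. rewrite <- Hs.
    symmetry. apply cat_val_l; auto.
  - assert (Hd' : in_dom (tdom (cat_trj m e)) t).
    { simpl. apply in_shift_l; [apply tdom_ok|]. destruct Hd; lra. }
    split; auto. intros h. destruct (Hv Hd) as [s Hs]. exists s. rewrite <- Hs.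
    apply cat_val_l; auto.
Qed.

Lemma good_cat_r S Y (m : ftrj (S+Y)) e t : 0 <= t ->
  good (cat_trj m e) (flen m + t) -> good e t.
Proof.
  intros Ht [Hd Hv].
  assert (Hn : ~ flen m + t < flen m) by lra.
  pose proof (@cat_r _ _ _ Hd Hn) as Hd'. simpl in Hd'.
  replace (flen m + t - flen m) with t in Hd' by ring.
  split; auto. intros h. destruct (Hv Hd) as [s Hs]. exists s. rewrite <- Hs.
  symmetry. rewrite (cat_val_r _ _ Hd (@cat_r _ _ _ Hd Hn) Hn). apply tfun_irr; ring.
Qed.

Lemma L1 S Y (m : ftrj (S+Y)) (e : trj (S+Y)) :
  tdom (tau_trj (ftrj_to_trj m)) <> DOp (flen m) ->
  tau_trj (cat_trj m e) = tau_trj (ftrj_to_trj m).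
Proof.
  intros Hne. apply tau_trj_eq.
  destruct (tau_trj_LIP (ftrj_to_trj m)) as [[Inc Val] Lg].
  set (P := tau_trj (ftrj_to_trj m)) in *.
  split; [split|].
  - intros t h. pose proof (Inc t h) as h'. simpl in h'. simpl. apply in_shift_l; [apply tdom_ok|].
    destruct h'; lra.
  - intros t h h'. pose proof (Inc t h') as h''. rewrite (cat_val_l _ _ h h'').
    + apply Val.
    + simpl in h''. destruct h''; lra.
  - intros t Ht Hall. destruct (Rlt_dec t (flen m)) as [Hl|Hl].
    + apply Lg; auto. intros t' Ht'. apply (proj1 (@good_cat_l _ _ m e t' ltac:(lra))). apply Hall; auto.
    + exfalso. apply Hne. apply dom_ext; [apply tdom_ok | exact (flen_ok m) |].
      intro t0; split; intro h0.
      * exact (Inc t0 h0).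
      * destruct h0 as [a b]. apply Lg; auto. intros t' Ht'.
        apply (proj1 (@good_cat_l _ _ m e t' ltac:(lra))). apply Hall; lra.
Qed.

Lemma L2 S Y (m : ftrj (S+Y)) (e : trj (S+Y))
  (Heq : tdom (tau_trj (ftrj_to_trj m)) = DOp (flen m)) :
  tau_trj (cat_trj m e) =
  cat_trj (trj_to_ftrj (tau_trj (ftrj_to_trj m)) (flen_ok m) Heq) (tau_trj e).
Proof.
  apply tau_trj_eq.
  destruct (tau_trj_LIP (ftrj_to_trj m)) as [[Inc Val] Lg].
  destruct (tau_trj_LIP e) as [[IncQ ValQ] LgQ].
  split; [split|].
  - intros t h. simpl in h |- *. destruct (Rlt_dec t (flen m)) as [Hl|Hl].
    + apply in_shift_l; [apply tdom_ok|]. split; [exact (proj1 h)|]; lra.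
    + apply in_shift_r; [exact (flen_ok m)|]. apply IncQ. exact (@cat_r _ _ _ h Hl).
  - intros t h h'. simpl in h'. destruct (Rlt_dec t (flen m)) as [Hl|Hl].
    + assert (hm : in_dom (DOp (flen m)) t) by (split; [exact (proj1 h)|lra]).
      rewrite (cat_val_l _ _ h hm Hl).
      rewrite (@cat_val_l _ (trj_to_ftrj _ (flen_ok m) Heq) (tau_trj e) t h' hm Hl). simpl.
      apply (Val t hm).
    + pose proof (@cat_r _ _ _ h' Hl) as hq. simpl in hq.
      rewrite (@cat_val_r _ (trj_to_ftrj _ (flen_ok m) Heq) (tau_trj e) t h' hq Hl).
      rewrite (cat_val_r _ _ h (IncQ _ hq) Hl). apply ValQ.
  - intros t Ht Hall. simpl. destruct (Rlt_dec t (flen m)) as [Hl|Hl].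
    + apply in_shift_l; [apply tdom_ok|]. lra.
    + apply in_shift_r; [exact (flen_ok m)|]. apply LgQ; [lra|].
      intros t' Ht'. apply (@good_cat_r _ _ m e t'); [lra|]. apply Hall.
      pose proof (flen_ok m). lra.
Qed.

Lemma tau_Hret_yes S Y X (m : ftrj (S+Y)) (x : X)
  (Heq : tdom (tau_trj (ftrj_to_trj m)) = DOp (flen m)) :
  @tau S Y X (Hret m x) = Hret (trj_to_ftrj _ (flen_ok m) Heq) x.
Proof.
  unfold tau; cbn zeta. destruct (excluded_middle_informative _) as [H'|H']; [|contradiction].
  f_equal. f_equal. apply proof_irrelevance.
Qed.

Lemma tau_Hret_no S Y X (m : ftrj (S+Y)) (x : X) :
  tdom (tau_trj (ftrj_to_trj m)) <> DOp (flen m) ->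
  @tau S Y X (Hret m x) = Htrj (tau_trj (ftrj_to_trj m)).
Proof.
  intro Hn. unfold tau; cbn zeta. destruct (excluded_middle_informative _) as [H'|H']; [contradiction|].
  reflexivity.
Qed.

Lemma cat_conv S (m n : ftrj S) : ftrj_to_trj (cat_ftrj m n) = cat_trj m (ftrj_to_trj n).
Proof.
  unfold ftrj_to_trj, cat_trj, cat_ftrj; simpl. f_equal. apply proof_irrelevance.
Qed.

Theorem lemma2 (S Y : Type) :
  (forall (X : Type) (x : X), @tau S Y X (@eta (S + Y) X x) = @eta S X x) /\
  (forall (X Z : Type) (f : X -> H (S + Y) Z) (p : H (S + Y) X),
      @tau S Y Z (@klift (S + Y) X Z f p)
      = @klift S X Z (fun x => @tau S Y Z (f x)) (@tau S Y X p)).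
Proof.
  split.
  - intros X x. unfold eta.
    assert (HE : tdom (tau_trj (ftrj_to_trj (eps_ftrj (S+Y)))) = DOp (flen (eps_ftrj (S+Y)))).
    { destruct (tau_trj_LIP (ftrj_to_trj (eps_ftrj (S+Y)))) as [[Inc _] _].
      apply dom_ext; [apply tdom_ok | simpl; lra |].
      intro t; split; intro h.
      - exact (Inc t h).
      - exfalso. exact (in_dom_empty h). }
    rewrite (@tau_Hret_yes S Y _ _ _ HE). f_equal. apply ftrj_eq; [reflexivity|].
    intros t h1 h2. exfalso. exact (in_dom_empty h2).
  - intros X Z f p. destruct p as [m x | e]; [|reflexivity].
    destruct (classic (tdom (tau_trj (ftrj_to_trj m)) = DOp (flen m))) as [Heq | Hne].
    + rewrite (@tau_Hret_yes S Y _ _ _ Heq). cbn [klift].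
      destruct (f x) as [n y | e].
      * assert (E : tau_trj (ftrj_to_trj (cat_ftrj m n)) =
                    cat_trj (trj_to_ftrj _ (flen_ok m) Heq) (tau_trj (ftrj_to_trj n))).
        { rewrite cat_conv. apply L2. }
        destruct (classic (tdom (tau_trj (ftrj_to_trj n)) = DOp (flen n))) as [HeqN | HneN].
        -- rewrite (@tau_Hret_yes S Y _ _ _ HeqN).
           assert (Heq2 : tdom (tau_trj (ftrj_to_trj (cat_ftrj m n))) = DOp (flen (cat_ftrj m n))).
           { rewrite E. simpl. rewrite HeqN. reflexivity. }
           rewrite (@tau_Hret_yes S Y _ _ _ Heq2). f_equal. apply ftrj_eq; [reflexivity|].
           intros t h1 h2. simpl.
           assert (h' : in_dom (tdom (cat_trj (trj_to_ftrj _ (flen_ok m) Heq) (tau_trj (ftrj_to_trj n)))) t).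
           { rewrite <- E, Heq2. exact h1. }
           rewrite (trj_fun_eq E _ h').
           simpl. unfold cat_fun. destruct (Rlt_dec _ _).
           ++ apply ffun_irr; reflexivity.
           ++ simpl. apply tfun_irr; reflexivity.
        -- rewrite (@tau_Hret_no S Y _ _ _ HneN). cbn [klift].
           assert (Hne2 : tdom (tau_trj (ftrj_to_trj (cat_ftrj m n))) <> DOp (flen (cat_ftrj m n))).
           { rewrite E. simpl. intro Hc. apply HneN.
             destruct (tdom (tau_trj (ftrj_to_trj n))); simpl in Hc; try discriminate.
             injection Hc; intro; f_equal; lra. }
           rewrite (@tau_Hret_no S Y _ _ _ Hne2). f_equal. exact E.
      * cbn [tau]. f_equal. apply L2.
    + rewrite (@tau_Hret_no S Y _ _ _ Hne). cbn [klift].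
      destruct (f x) as [n y | e].
      * assert (E : tau_trj (ftrj_to_trj (cat_ftrj m n)) = tau_trj (ftrj_to_trj m)).
        { rewrite cat_conv. apply L1; auto. }
        assert (Hne2 : tdom (tau_trj (ftrj_to_trj (cat_ftrj m n))) <> DOp (flen (cat_ftrj m n))).
        { rewrite E. simpl. intro Hc.
          destruct (tau_trj_LIP (ftrj_to_trj m)) as [[Inc _] _].
          destruct (Rle_lt_or_eq_dec 0 (flen n) (flen_ok n)) as [Hp|Hz].
          - assert (A : in_dom (tdom (tau_trj (ftrj_to_trj m))) (flen m)).
            { rewrite Hc. unfold in_dom. split; [exact (flen_ok m) | lra]. }
            destruct (Inc _ A) as [_ B]; simpl in B; lra.
          - apply Hne. rewrite Hc, <- Hz, Rplus_0_r. reflexivity. }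
        rewrite (@tau_Hret_no S Y _ _ _ Hne2). f_equal. exact E.
      * cbn [tau]. f_equal. apply L1; auto.
Qed.
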